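(* Let $p$ be a prime, let $G$ be a finite $p$-solvable group, and let $P$ be a Sylow $p$-subgroup of $G$. Suppose that there is a subgroup $H$ of $P$ with $P' \le H \le \Phi(P)$ such that $H$ is $s$-semipermutable in $G$. Suppose moreover that $N_G(P)$ is $p$-supersolvable. Then $G$ is $p$-supersolvable.
   Context: All groups are finite. $P'$ denotes the derived (commutator) subgroup of $P$ and $\Phi(P)$ its Frattini subgroup. A group is $p$-supersolvable if every chief factor of order divisible by $p$ is cyclic (of order $p$). A subgroup $H$ of $G$ is $s$-semipermutable in $G$ if $HQ = QH$ for every Sylow $q$-subgroup $Q$ of $G$ and every prime $q$ not dividing $|H|$. *)

(* Defs.v *)
From mathcomp Require Import all_boot all_fingroup all_solvable.
Set Implicit Arguments. Unset Strict Implicit. Unset Printing Implicit Defensive.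
Local Open Scope group_scope.

Definition p_solvable (gT : finGroupType) (p : nat) (G : {set gT}) : Prop :=
  forall U V : {group gT},
    subnormal U G -> maxnormal V U U ->
    p.-group (U / V) \/ p^'.-group (U / V).

Definition p_supersolvable (gT : finGroupType) (p : nat) (G : {set gT}) : Prop :=
  forall U V : {group gT},
    chief_factor G V U -> p %| #|U / V| -> #|U / V| = p.

Definition s_semipermutable (gT : finGroupType) (H G : {set gT}) : Prop :=
  forall q : nat, prime q -> ~~ (q %| #|H|) ->
    forall Q : {group gT}, Q \in 'Syl_q(G) -> H * Q = Q * H.

(* Main.v *)
Require Import Defs.
From mathcomp Require Import all_boot all_fingroup all_solvable.
Set Implicit Arguments. Unset Strict Implicit. Unset Printing Implicit Defensive.
Local Open Scope group_scope.

Lemma chief_card (gT : finGroupType) (G V U : {group gT}) :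
  chief_factor G V U -> #|U / V| = #|U : V|.
Proof.
case/andP=> /maxgroupp/andP[_ nVG] /andP[sUG _].
by rewrite card_quotient // (subset_trans sUG nVG).
Qed.
Arguments chief_card {gT G V U}.

Section Gen.
Variable gT : finGroupType.
Implicit Types G H K U V W N S M P Q R : {group gT}.


Lemma minnormal_chief G U : minnormal U G -> U <| G -> chief_factor G 1 U.
Proof.
move=> minU nUG; rewrite /chief_factor nUG andbT.
case/mingroupP: minU => /andP[ntU nUG'] minU.
apply/maxgroupP; split.
  by rewrite norm1 subsetT andbT proper1G.
move=> W /andP[prWU nWG] _; apply/val_inj/eqP => /=.
apply/negPn/negP=> ntW.
have := minU W; rewrite ntW nWG => /(_ isT (proper_sub prWU)) eqWU.
by rewrite eqWU properE subxx in prWU.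
Qed.

Lemma subnormal_pcore pi K S : S <|<| K -> pi.-group S -> S \subset 'O_pi(K).
Proof.
move=> snS piS; have [n leKn] := ubnP #|K|.
elim: n K leKn snS => // n IHn K /ltnSE leKn snS.
have [eqSK | [M [snSM nsMK prMK]]] := subnormalEr snS.
  rewrite eqSK; apply: pcore_max; last exact: normal_refl.
  by rewrite /pgroup -eqSK.
apply: subset_trans (IHn M _ snSM) _.
  by apply: leq_trans (proper_card prMK) leKn.
apply: pcore_max; first exact: pcore_pgroup.
exact: char_normal_trans (pcore_char _ _) nsMK.
Qed.

Lemma p_solvable_minnormal p G U :
  p_solvable p G -> minnormal U G -> U <| G -> p.-group U \/ p^'.-group U.
Proof.
move=> psG minU nsUG.
have [sUG nUG] := andP nsUG.
have [ntU minU'] := mingroupP minU.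
pose gP := fun S : {group gT} => (S :!=: 1) && (S <|<| G).
have gPU : gP U by rewrite /gP (andP ntU).1 normal_subnormal.
have [S /mingroupP[/andP[ntS snS] minS] sSU] := mingroup_exists gPU.
have simS : simple S.
  apply/mingroupP; split; first by rewrite ntS normG.
  move=> K /andP[ntK nKS] sKS; apply: minS => //.
  rewrite /gP ntK /=; apply: subnormal_trans snS.
  by apply: normal_subnormal; rewrite /normal sKS.
have snSU : S <|<| U.
  by have := setI_subnormal sUG snS; rewrite (setIidPl sSU).
have cardS : #|S / 1| = #|S| by rewrite card_quotient ?norm1 ?subsetT // indexg1.
have key : forall pi, pi.-group (S / 1) -> pi.-group U.
  move=> pi; rewrite /pgroup cardS => piS.
  have sSO := @subnormal_pcore pi U S snSU piS.
  have ntO : 'O_pi(U) != 1.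
    by apply: contra ntS => /eqP O1; rewrite -subG1 -O1.
  have nsOG : 'O_pi(U) <| G := char_normal_trans (pcore_char _ _) nsUG.
  have := minU' [group of 'O_pi(U)]; rewrite /= ntO (normal_norm nsOG).
  move=> /(_ isT (pcore_sub _ _)) eqOU.
  by rewrite -eqOU; apply: pcore_pgroup.
have := psG S 1%G snS; rewrite -simple_maxnormal => /(_ simS).
by case=> /key; [left | right].
Qed.

Lemma cosetpre_subnormal N (A B : {group coset_of N}) :
  A <|<| B -> coset N @*^-1 A <|<| coset N @*^-1 B.
Proof.
case/subnormalP=> s As <-{B}; apply/subnormalP.
exists (map (fun K : {group coset_of N} => (coset N @*^-1 K)%G) s).
  elim: s A As => //= K s IHs A /andP[nAK Ks].
  by rewrite cosetpre_normal nAK IHs.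
by elim/last_ind: s {As} => //= s K _; rewrite map_rcons !last_rcons.
Qed.

Lemma cosetpre_maxnormal N (A B C : {group coset_of N}) :
  maxnormal A B C ->
  maxnormal (coset N @*^-1 A) (coset N @*^-1 B) (coset N @*^-1 C).
Proof.
case/maxgroupP=> /andP[prAB nAC] maxA; apply/maxgroupP; split.
  by rewrite cosetpre_proper prAB morphpre_norms.
move=> W /andP[prWB nWC] sAW.
have sNW : N \subset W by apply: subset_trans sAW; apply: sub_cosetpre.
have sWN : W \subset 'N(N).
  by apply: subset_trans (proper_sub prWB) _; apply: subsetIl.
have nsNW : N <| W by rewrite /normal sNW.
have eqW : coset N @*^-1 (W / N) = W := quotientGK nsNW.
have h1 : ((W / N)%G \proper B) && (C \subset 'N((W / N)%G)).
  rewrite /= -cosetpre_proper eqW prWB /=.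
  by rewrite -(cosetpreK C) quotient_norms.
have h2 : A \subset (W / N)%G by rewrite /= -(cosetpreK A) quotientS.
have eqWA := maxA _ h1 h2.
by apply: val_inj; rewrite /= -eqW eqWA.
Qed.

Lemma p_solvable_quo p G N : N <| G -> p_solvable p G -> p_solvable p (G / N).
Proof.
move=> nsNG psG U' V' snU maxV.
have snUG : coset N @*^-1 U' <|<| G.
  by rewrite -(quotientGK nsNG); apply: (@cosetpre_subnormal N _ (G / N)%G).
have maxV0 := @cosetpre_maxnormal _ _ _ _ maxV.
have := psG _ _ snUG maxV0.
have nsV := maxnormal_normal maxV0.
have nsV' := maxnormal_normal maxV.
rewrite /pgroup !card_quotient ?(normal_norm nsV) ?(normal_norm nsV') //.
rewrite index_morphpre //= ?ker_coset //.
by rewrite -[coset N @* _]/('N(N) / N) im_quotient subsetT.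
Qed.


Lemma p_supersolvable_morphim p (rT : finGroupType) G
  (f : {morphism G >-> rT}) :
  p_supersolvable p G -> p_supersolvable p (f @* G).
Proof.
move=> psG U' V' /andP[maxV nsU] pdiv.
have kerG : 'ker f \subset G := subset_trans (ker_sub_pre f 1%G) (subsetIl _ _).
have GK : f @*^-1 (f @* G) = G := morphimGK kerG (subxx _).
have sUf : U' \subset f @* G := normal_sub nsU.
have [/andP[prVU nVf] maxV'] := maxgroupP maxV.
have sVf : V' \subset f @* G := subset_trans (proper_sub prVU) sUf.
have chU : chief_factor G (f @*^-1 V')%G (f @*^-1 U')%G.
  have nsU0 : f @*^-1 U' <| G by rewrite -[X in _ <| X]GK morphpre_normal.
  rewrite /chief_factor /= nsU0 andbT.
  apply/maxgroupP; split.
    rewrite /= morphpre_proper // prVU /=.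
    by have := morphpre_norms f nVf; rewrite GK.
  move=> W /andP[prWU nWG] sVW.
  have sWG : W \subset G.
    by apply: subset_trans (proper_sub prWU) _; apply: subsetIl.
  have kW : 'ker f \subset W := subset_trans (ker_sub_pre f V') sVW.
  have eqW : f @*^-1 (f @* W) = W := morphimGK kW sWG.
  have h1 : ((f @* W)%G \proper U') && (f @* G \subset 'N((f @* W)%G)).
    rewrite /= -(morphpre_proper (f:=f)) ?eqW ?prWU ?morphimS //=.
    exact: morphim_norms.
  have h2 : V' \subset (f @* W)%G.
    by rewrite /= -(morphpreK sVf) morphimS.
  have eqWV := maxV' _ h1 h2.
  by apply: val_inj; rewrite /= -eqW eqWV.
have chU' : chief_factor (f @* G) V' U' by rewrite /chief_factor maxV nsU.
rewrite (chief_card chU') in pdiv *.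
have := psG _ _ chU; rewrite (chief_card chU) /= index_morphpre //.
by apply.
Qed.

Lemma p_supersolvable_quo p K N :
  K \subset 'N(N) -> p_supersolvable p K -> p_supersolvable p (K / N).
Proof.
move=> nNK psK.
have := @p_supersolvable_morphim p _ K [morphism of restrm nNK (coset N)] psK.
by rewrite morphim_restrm setIid.
Qed.


Lemma chief_factor_quo G N V U :
  N <| G -> chief_factor G V U -> U :&: N \subset V ->
  chief_factor (G / N) (V / N)%G (U / N)%G /\ #|U / N : V / N| = #|U : V|.
Proof.
move=> nsNG /andP[maxV nsUG] sUNV.
have [/andP[prVU nVG] maxV'] := maxgroupP maxV.
have [sUG nUG] := andP nsUG.
have nNG := normal_norm nsNG.
have nNU : U \subset 'N(N) := subset_trans sUG nNG.
have sVU := proper_sub prVU.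
have nNV : V \subset 'N(N) := subset_trans sVU nNU.
have idx : #|U / N : V / N| = #|U : V| := index_quotient_eq sUNV sVU nNU.
split=> //; rewrite /chief_factor quotient_normal // andbT.
apply/maxgroupP; split.
  rewrite /= quotient_norms // andbT properE quotientS //=.
  by rewrite -indexg_gt1 idx indexg_gt1; case/andP: prVU.
move=> W' /andP[prWU nWG] sVW.
pose W0 := (U :&: coset N @*^-1 W')%G.
have sVW0 : V \subset W0.
  by rewrite subsetI sVU -sub_quotient_pre.
have nW0G : G \subset 'N(W0).
  rewrite normsI // (subset_trans _ (morphpre_norm _ _)) //.
  by rewrite -sub_quotient_pre.
have eqW' : W' :=: (W0 / N).
  rewrite /= -[(U :&: _) / N]/(coset N @* (U :&: coset N @*^-1 W')).
  rewrite morphim_setIpre -/(U / N).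
  by apply/esym/setIidPr; apply: proper_sub prWU.
have [eqW0 | prW0] := eqVproper (subsetIl U (coset N @*^-1 W')).
  case/andP: prWU => _ /negP []; rewrite /= eqW'.
  by rewrite -[W0 / N]/((U :&: coset N @*^-1 W') / N) eqW0.
have := maxV' W0; rewrite prW0 nW0G => /(_ isT sVW0) eqW0V.
by apply: val_inj; rewrite /= eqW' eqW0V.
Qed.


Lemma s_semiperm_quo p G H P N :
  N <| G -> P \in 'Syl_p(G) -> H \subset P ->
  s_semipermutable H G -> s_semipermutable (H / N) (G / N).
Proof.
move=> nsNG sylP sHP sp q prq ndq Q' sylQ'.
move: sylP sylQ'; rewrite !inE => sylP sylQ'.
have [sNG nNG] := andP nsNG.
have pH : p.-group H := pgroupS sHP (pHall_pgroup sylP).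
have sHG : H \subset G := subset_trans sHP (pHall_sub sylP).
have nNH : H \subset 'N(N) := subset_trans sHG nNG.
have sQ'G := pHall_sub sylQ'.
pose M := (coset N @*^-1 Q')%G.
have sMG : M \subset G by rewrite sub_cosetpre_quo.
have sNM : N \subset M := sub_cosetpre _.
have nNM : M \subset 'N(N) := subset_trans sMG nNG.
have [Q sylQM] := Sylow_exists q M.
have sQM := pHall_sub sylQM.
have nNQ : Q \subset 'N(N) := subset_trans sQM nNM.
have eqQ : Q / N = Q'.
  have := quotient_pHall nNQ sylQM; rewrite /= cosetpreK => h.
  by have := pHall_id h (pHall_pgroup sylQ').
have sylQ : q.-Sylow(G) Q.
  rewrite /pHall (subset_trans sQM sMG) (pHall_pgroup sylQM) /=.
  rewrite -(Lagrange_index sMG sQM) pnatM.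
  case/and3P: sylQM => _ _ ->; rewrite andbT.
  have sGNM : G :&: N \subset M by rewrite subIset // sNM orbT.
  rewrite -(@index_quotient_eq _ G N M) //=.
  by rewrite cosetpreK; case/and3P: sylQ'.
case: (boolP (q %| #|H|)) => [qH | nqH].
  have eqqp : q = p.
    by have := pgroupP pH q prq qH; rewrite inE => /eqP.
  case: (trivgVpdiv (H / N)%G) => [H1 | [r prr rH]].
    have H1' : H / N = 1 := H1.
    by rewrite H1' mul1g mulg1.
  have pHN : p.-group (H / N) := quotient_pgroup _ pH.
  have := pgroupP pHN r prr rH; rewrite inE => /eqP err.
  by move: ndq; rewrite eqqp -err rH.
have := sp q prq nqH Q; rewrite inE sylQ => /(_ isT) eqHQ.
by rewrite -eqQ -!quotientMl ?eqHQ // (subset_trans (pHall_sub sylQ) nNG).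
Qed.


Lemma quo_norm_Syl p G P N :
  N <| G -> p.-Sylow(G) P -> 'N_(G / N)(P / N) = 'N_G(P) / N.
Proof.
move=> nsNG sylP.
have [sNG nNG] := andP nsNG.
have sPG := pHall_sub sylP.
have nNP : P \subset 'N(N) := subset_trans sPG nNG.
pose PN := (N <*> P)%G.
have ePN : PN :=: N * P := norm_joinEr nNP.
have sPNG : PN \subset G by rewrite /= join_subG sNG sPG.
have nsNPN : N <| PN by rewrite /normal /= joing_subl join_subG normG nNP.
have eqq : P / N = PN / N by rewrite ePN quotientMidl.
rewrite eqq -quotient_subnormG //.
have sPPN : P \subset PN := joing_subr _ _.
have sylP' : p.-Sylow(PN) P := pHall_subl sPPN sPNG sylP.
have fr := Frattini_arg (normalSG sPNG) sylP'.
apply/eqP; rewrite eqEsubset; apply/andP; split.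
  rewrite -fr ePN -mulgA quotientMidl quotientMl //.
  apply: mul_subG; apply: quotientS.
    by rewrite subsetI sPG normG.
  exact: setSI (subsetIl _ _).
apply: quotientS; rewrite subsetI subsetIl /= ePN.
by rewrite normsM // ?subsetIr // (subset_trans (subsetIl G _) nNG).
Qed.

End Gen.

Lemma pss_structure p (gT : finGroupType) (Y P : {group gT}) :
  prime p -> p_solvable p Y -> p_supersolvable p Y -> p.-Sylow(Y) P ->
  P * 'O_p^'(Y) <| Y.
Proof.
move=> prp; have [n] := ubnP #|Y|.
elim: n gT Y P => // n IHn gT Y P /ltnSE leYn psY pssY sylP.
have sPY := pHall_sub sylP.
have pP := pHall_pgroup sylP.
have nsR := pcore_normal p^' Y.
have nRP : P \subset 'N('O_p^'(Y)) := subset_trans sPY (normal_norm nsR).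
have [Y1 | ntY] := eqVneq (Y : {set gT}) 1.
  have -> : P * 'O_p^'(Y) = Y.
    apply/eqP; rewrite eqEsubset mul_subG ?pcore_sub //= {1}Y1.
    exact: subset_trans (sub1G _) (mulG_subr _ _).
  exact: normal_refl.
have [N minN sNY] := minnormal_exists ntY (normG Y).
have nsNY : N <| Y by rewrite /normal sNY (andP (mingroupp minN)).2.
have ntN : N :!=: 1 := (andP (mingroupp minN)).1.
have nNY := normal_norm nsNY.
have nNP : P \subset 'N(N) := subset_trans sPY nNY.
have ltYN : #|Y / N| < n := leq_trans (ltn_quotient ntN sNY) leYn.
have psYN := p_solvable_quo nsNY psY.
have pssYN := p_supersolvable_quo nNY pssY.
have sylPN : p.-Sylow(Y / N) (P / N) := quotient_pHall nNP sylP.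
have IH := IHn _ (Y / N)%G (P / N)%G ltYN psYN pssYN sylPN.
have eRP : P * 'O_p^'(Y) = 'O_p^'(Y) * P := normC nRP.
have [pN | p'N] := p_solvable_minnormal psY minN nsNY; last first.
  have sNR : N \subset 'O_p^'(Y) := pcore_max p'N nsNY.
  rewrite (pquotient_pcore nsNY p'N) -quotientMl // in IH.
  pose PR := ('O_p^'(Y) <*> P)%G.
  have ePR : PR :=: 'O_p^'(Y) * P := norm_joinEr nRP.
  rewrite eRP -ePR in IH *.
  have nsNPR : N <| PR.
    rewrite /normal (subset_trans sNR (joing_subl _ _)) /=.
    by rewrite join_subG (subset_trans (pcore_sub _ _) nNY) nNP.
  by rewrite -(quotientGK nsNPR) -(quotientGK nsNY) cosetpre_normal.
have pdN : p %| #|N|.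
  have [N1 | [r prr rN]] := trivgVpdiv N; first by rewrite N1 eqxx in ntN.
  by have := pgroupP pN r prr rN; rewrite inE => /eqP <-.
have chN := minnormal_chief minN nsNY.
have cardN : #|N| = p.
  have := pssY _ _ chN; rewrite (chief_card chN) indexg1; exact.
have sNP : N \subset P := subset_trans (pcore_max pN nsNY) (pcore_sub_Hall sylP).
have nsNP : N <| P by rewrite /normal sNP nNP.
have cPN : P \subset 'C(N).
  have := meet_center_nil (pgroup_nil pP) nsNP ntN.
  have prN : prime #|N| by rewrite cardN.
  case: (boolP (N \subset 'Z(P))) => [sNZ _ | nsNZ]; last first.
    by rewrite (prime_TIg prN nsNZ) eqxx.
  by rewrite centsC; apply: subset_trans sNZ (subsetIr _ _).
have nsCY : 'C_Y(N) <| Y.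
  by have := subcent_normal Y N; rewrite (setIidPl nNY).
have sPC : P \subset 'C_Y(N) by rewrite subsetI sPY.
pose M := (coset N @*^-1 'O_p^'(Y / N))%G.
have nsMY : M <| Y.
  by rewrite -(quotientGK nsNY) cosetpre_normal pcore_normal.
have sNM : N \subset M := sub_cosetpre _.
have eM : M / N = 'O_p^'(Y / N) := cosetpreK _.
have nMP : P \subset 'N(M) := subset_trans sPY (normal_norm nsMY).
pose PM := (M <*> P)%G.
have ePM : PM :=: M * P := norm_joinEr nMP.
have nsPM : PM <| Y.
  have nsNPM : N <| PM.
    rewrite /normal (subset_trans sNM (joing_subl _ _)) /=.
    by rewrite join_subG (subset_trans (normal_sub nsMY) nNY) nNP.
  rewrite -eM -quotientMl // (normC nMP) -ePM in IH.
  by rewrite -(quotientGK nsNPM) -(quotientGK nsNY) cosetpre_normal.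
pose K0 := (M :&: 'C_Y(N))%G.
have nsK0 : K0 <| Y := normalI nsMY nsCY.
have cNN : N \subset 'C(N).
  by apply: cyclic_abelian; apply: prime_cyclic; rewrite cardN.
have sNK0 : N \subset K0 by rewrite subsetI sNM subsetI sNY.
have p'MN : p^'.-nat #|M : N|.
  rewrite -card_quotient ?(subset_trans (normal_sub nsMY) nNY) // eM.
  exact: pcore_pgroup.
have sK0M : K0 \subset M := subsetIl _ _.
have p'K0N : p^'.-nat #|K0 : N|.
  apply: pnat_dvd p'MN; rewrite -(Lagrange_index sK0M sNK0).
  exact: dvdn_mull.
have hallN : Hall K0 N.
  by rewrite /Hall sNK0 (pnat_coprime pN p'K0N).
have nsNK0 : N <| K0 by rewrite /normal sNK0 (subset_trans (normal_sub nsK0) nNY).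
have /splitsP[K /complP[tiNK eNK]] := SchurZassenhaus_split hallN nsNK0.
have sKK0 : K \subset K0 by rewrite -eNK mulG_subr.
have cardK : #|K| = #|K0 : N|.
  by rewrite -divgS // -eNK (TI_cardMg tiNK) mulKn.
have p'K : p^'.-group K by rewrite /pgroup cardK.
have sK0C : K0 \subset 'C(N) := subset_trans (subsetIr _ _) (subsetIr _ _).
have nsKK0 : K <| K0.
  rewrite /normal sKK0 -eNK mul_subG ?normG //.
  apply: cents_norm; rewrite centsC; exact: subset_trans sKK0 sK0C.
have sKR : K \subset 'O_p^'(Y).
  apply: subset_trans (pcore_max p'K nsKK0) _.
  apply: pcore_max; first exact: pcore_pgroup.
  exact: char_normal_trans (pcore_char _ _) nsK0.
have eq1 : P * 'O_p^'(Y) = (PM :&: 'C_Y(N)) * 'O_p^'(Y).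
  rewrite ePM -(normC nMP) -group_modl // -/K0 -eNK mulgA (mulGSid sNP).
  by rewrite -mulgA (mulSGid sKR).
by rewrite eq1 normalM // normalI.
Qed.

Lemma arith1 (u l g c s q i1 i2 : nat) :
  (u * l = g * c -> u * s = q * c -> q * i1 = g -> s * i2 = l ->
  q * (c * i1) = q * (c * i2))%N.
Proof.
move=> A B C D.
rewrite mulnCA C mulnC -A -D mulnA B -mulnA.
by [].
Qed.

Lemma chief1_minnormal (gT : finGroupType) (G U : {group gT}) :
  chief_factor G 1 U -> minnormal U G.
Proof.
case/andP=> /maxgroupP[/andP[pr1U nG] max1] /andP[_ nUG].
apply/mingroupP; split; first by rewrite nUG andbT -proper1G.
move=> W /andP[ntW nWG] sWU; apply/eqP; rewrite eqEsubset sWU /=.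
apply/idPn=> nsUW.
have prW : W \proper U by rewrite properE sWU nsUW.
have := max1 W; rewrite prW nWG sub1G => /(_ isT isT) W1.
by rewrite W1 eqxx in ntW.
Qed.

Lemma main_ind p : prime p -> forall n (gT : finGroupType) (G P H : {group gT}),
  #|G| < n -> p_solvable p G -> P \in 'Syl_p(G) -> H \subset P ->
  P^`(1) \subset H -> H \subset 'Phi(P) -> s_semipermutable H G ->
  p_supersolvable p 'N_G(P) -> p_supersolvable p G.
Proof.
move=> prp n; elim: n => // n IHn gT G P H /ltnSE leGn psG sylP' sHP sPH sHPhi
  sp pssN.
have sylP : p.-Sylow(G) P by move: sylP'; rewrite inE.
have sPG := pHall_sub sylP.
have pP := pHall_pgroup sylP.
have pH : p.-group H := pgroupS sHP pP.
have sHG := subset_trans sHP sPG.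
have IHq : forall N : {group gT}, N <| G -> N :!=: 1 -> p_supersolvable p (G / N).
  move=> N nsNG ntN.
  have [sNG nNG] := andP nsNG.
  have nNP := subset_trans sPG nNG.
  have nNH := subset_trans sHG nNG.
  apply: (IHn _ (G / N)%G (P / N)%G (H / N)%G).
  - exact: leq_trans (ltn_quotient ntN sNG) leGn.
  - exact: p_solvable_quo.
  - by rewrite inE; apply: quotient_pHall.
  - exact: quotientS.
  - by rewrite /= -quotient_der // quotientS.
  - by rewrite /= -(quotient_Phi pP nNP) quotientS.
  - exact: s_semiperm_quo sylP' sHP sp.
  rewrite /= (quo_norm_Syl nsNG sylP).
  by apply: p_supersolvable_quo => //; apply: subset_trans (subsetIl _ _) nNG.
move=> U V chG pdU.
have [maxV nsUG] := andP chG.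
have [sUG nUG] := andP nsUG.
have [/andP[prVU nVG] _] := maxgroupP maxV.
case: (eqVneq (V : {set gT}) 1) => [V1 | ntV]; last first.
  have nsVG : V <| G by rewrite /normal (subset_trans (proper_sub prVU) sUG).
  have [chQ idx] := chief_factor_quo nsVG chG (subsetIr _ _).
  have := IHq V nsVG ntV _ _ chQ.
  by rewrite (chief_card chQ) idx -(chief_card chG); apply.
have V1g : V = 1%G := val_inj V1.
rewrite V1g in chG pdU *.
rewrite (chief_card chG) indexg1 in pdU *.
have minU := chief1_minnormal chG.
have ntU : U :!=: 1 := (andP (mingroupp minU)).1.
have pU : p.-group U.
  case: (p_solvable_minnormal psG minU nsUG) => // p'U.
  by have := pgroupP p'U p prp pdU; rewrite !inE eqxx.
have [R1 | ntR] := eqVneq ('O_p^'(G) : {set gT}) 1; last first.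
  have tiUR : U :&: 'O_p^'(G) = 1.
    exact: coprime_TIg (pnat_coprime pU (pcore_pgroup _ _)).
  have sUR1 : U :&: 'O_p^'(G) \subset 1%G by rewrite tiUR.
  have [chQ idx] := chief_factor_quo (pcore_normal _ _) chG sUR1.
  have := IHq _ (pcore_normal _ _) ntR _ _ chQ.
  by rewrite (chief_card chQ) idx indexg1; apply.
have sUP : U \subset P := subset_trans (pcore_max pU nsUG) (pcore_sub_Hall sylP).
have [cPU | ncPU] := boolP (P \subset 'C(U)).
  have nsCG : 'C_G(U) <| G.
    by have := subcent_normal G U; rewrite (setIidPl nUG).
  have sylPC : p.-Sylow('C_G(U)) P.
    by apply: pHall_subl _ (subsetIl _ _) sylP; rewrite subsetI sPG.
  have fr := Frattini_arg nsCG sylPC.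
  have sUN : U \subset 'N_G(P) by rewrite subsetI sUG (subset_trans sUP (normG P)).
  have nsUN : U <| 'N_G(P).
    by rewrite /normal sUN (subset_trans (subsetIl _ _) nUG).
  have minUN : minnormal U 'N_G(P).
    apply/mingroupP; split; first by rewrite ntU (normal_norm nsUN).
    move=> W /andP[ntW nWN] sWU.
    have [_ minU'] := mingroupP minU; apply: minU' => //.
    rewrite ntW -fr mul_subG //.
    apply: cents_norm; apply: subset_trans (subsetIr _ _) _.
    exact: centS.
  have chN := minnormal_chief minUN nsUN.
  have := pssN _ _ chN; rewrite (chief_card chN) indexg1; apply.
  by [].
have ntUP : [~: U, P] != 1.
  by apply/eqP => /commG1P; rewrite centsC; apply/negP.
have sUPH : [~: U, P] \subset H.
  by apply: subset_trans sPH; rewrite derg1 commgSS.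
have sUPU : [~: U, P] \subset U by rewrite commg_subl (subset_trans sPG nUG).
pose W := (U :&: H)%G.
have ntW : W :!=: 1.
  apply: contra ntUP => /eqP W1; rewrite -subG1 -W1 /= subsetI sUPU sUPH.
  by [].
have nHP : P \subset 'N(H) := sub_der1_norm sPH sHP.
have nWP : P \subset 'N(W) by rewrite normsI ?(subset_trans sPG nUG).
have sylNW : forall q (Q : {group gT}), prime q -> q.-Sylow(G) Q ->
    Q \subset 'N(W) -> ~~ (q %| #|G : 'N_G(W)|).
  move=> q Q prq sylQ nWQ.
  have sQN : Q \subset 'N_G(W) by rewrite subsetI (pHall_sub sylQ).
  have := pHall_subl sQN (subsetIl _ _) sylQ.
  case/and3P: sylQ => _ _ q'GQ _.
  rewrite -(p'natE _ prq); apply: pnat_dvd q'GQ.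
  by rewrite -(Lagrange_index (subsetIl G _) sQN) dvdn_mulr.
have nWG : G \subset 'N(W).
  have : #|G : 'N_G(W)| == 1%N.
    rewrite eqn_leq indexg_gt0 andbT leqNgt; apply/negP => gt1.
    have prq := pdiv_prime gt1; have qd := pdiv_dvd #|G : 'N_G(W)|.
    set q := pdiv _ in prq qd.
    have [Q sylQ] := Sylow_exists q G.
    case: (eqVneq q p) => [eqp | neqp].
      by move: (sylNW p P prp sylP nWP); rewrite -eqp qd.
    have nqH : ~~ (q %| #|H|).
      apply/negP => qH; have := pgroupP pH q prq qH.
      by rewrite inE => /eqP eqqp; rewrite eqqp eqxx in neqp.
    have eHQ := sp q prq nqH Q; rewrite inE sylQ in eHQ.
    have {}eHQ := eHQ isT.
    pose HQ := (H <*> Q)%G.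
    have eHQ' : HQ :=: H * Q := comm_joingE eHQ.
    have pQ := pHall_pgroup sylQ.
    have p'Q : p^'.-group Q.
      apply/pgroupP => r prr rQ; have := pgroupP pQ r prr rQ.
      by rewrite !inE => /eqP ->.
    have tiHQ : H :&: Q = 1 := coprime_TIg (pnat_coprime pH p'Q).
    have sHHQ : H \subset HQ := joing_subl _ _.
    have sQHQ : Q \subset HQ := joing_subr _ _.
    have hallH : p.-Hall(HQ) H.
      rewrite /pHall sHHQ pH /= -divgS // eHQ' (TI_cardMg tiHQ) mulKn //.
    have sHQG : HQ \subset G by rewrite join_subG sHG (pHall_sub sylQ).
    have nsHQU : HQ :&: U <| HQ := normalGI sHQG nsUG.
    have pHQU : p.-group (HQ :&: U) := pgroupS (subsetIr _ _) pU.
    have sHQUH : HQ :&: U \subset H.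
      exact: subset_trans (pcore_max pHQU nsHQU) (pcore_sub_Hall hallH).
    have eW : HQ :&: U = W.
      apply/eqP; rewrite eqEsubset /= subsetI sHQUH subsetIr /=.
      by rewrite subsetI (subset_trans (subsetIr _ _) sHHQ) subsetIl.
    have nWQ : Q \subset 'N(W).
      rewrite -eW normsI //; first exact: subset_trans sQHQ (normG _).
      exact: subset_trans (pHall_sub sylQ) nUG.
    by move: (sylNW q Q prq sylQ nWQ); rewrite qd.
  by rewrite indexg_eq1 subsetI => /andP[].
have eWU : W :=: U.
  have [_ minU'] := mingroupP minU.
  have h1 : (W :!=: 1) && (G \subset 'N(W)) by rewrite ntW nWG.
  have e := minU' W h1 (subsetIl _ _). exact e.
have sUH : U \subset H by rewrite -eWU subsetIr.
have sUPhi : U \subset 'Phi(P) := subset_trans sUH sHPhi.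
have ntGU : (U : {set gT}) != 1 := ntU.
have R'1 : 'O_p^'(G / U) = 1.
  pose M := (coset U @*^-1 'O_p^'(G / U))%G.
  have nsMG : M <| G.
    by rewrite -(quotientGK nsUG) cosetpre_normal pcore_normal.
  have sUM : U \subset M := sub_cosetpre _.
  have eM : M / U = 'O_p^'(G / U) := cosetpreK _.
  have sMG := normal_sub nsMG.
  have nUM : M \subset 'N(U) := subset_trans sMG nUG.
  have p'MU : p^'.-nat #|M : U|.
    by rewrite -card_quotient // eM; apply: pcore_pgroup.
  have hallU : Hall M U by rewrite /Hall sUM (pnat_coprime pU p'MU).
  have nsUM : U <| M by rewrite /normal sUM.
  have /splitsP[R0 /complP[tiUR0 eUR0]] := SchurZassenhaus_split hallU nsUM.
  have sR0M : R0 \subset M by rewrite -eUR0 mulG_subr.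
  have cardR0 : #|R0| = #|M : U|.
    by rewrite -divgS // -eUR0 (TI_cardMg tiUR0) mulKn.
  have p'R0 : p^'.-group R0 by rewrite /pgroup cardR0.
  have nUR0 : R0 \subset 'N(U) := subset_trans sR0M nUM.
  have copUR0 : coprime #|U| #|R0| := pnat_coprime pU p'R0.
  have nUN : 'N_G(R0) \subset 'N(U) := subset_trans (subsetIl _ _) nUG.
  have eG : U * 'N_G(R0) = G.
    apply/eqP; rewrite eqEsubset mul_subG ?subsetIl //=.
    apply/subsetP => g Gg.
    have sR0g : (R0 :^ g)%G \subset U * R0.
      by rewrite eUR0 -(normsP (normal_norm nsMG) g Gg) conjSg.
    have [u Uu eR0g] := SchurZassenhaus_trans_sol (pgroup_sol pU) nUR0 sR0g
      copUR0 (cardJg _ _).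
    have Ngu : g * u^-1 \in 'N_G(R0).
      have Gu : u \in G := subsetP sUG u Uu.
      rewrite inE groupM ?groupV //=.
      by apply/normP; rewrite conjsgM /= eR0g conjsgK.
    have eNU : 'N_G(R0) * U = U * 'N_G(R0) := normC nUN.
    by rewrite -eNU -(mulgKV u g) mem_mulg.
  pose L := 'N_G(R0)%G.
  have [S sylS] := Sylow_exists p L.
  have sSL := pHall_sub sylS.
  have sLG : L \subset G := subsetIl _ _.
  have sULS : U :&: L \subset S.
    apply: subset_trans (pcore_sub_Hall sylS).
    apply: pcore_max; first exact: pgroupS (subsetIl _ _) pU.
    by have := normalGI sLG nsUG; rewrite setIC.
  have nUS : S \subset 'N(U) := subset_trans sSL nUN.
  pose P1 := (U <*> S)%G.
  have eP1 : P1 :=: U * S := norm_joinEr nUS.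
  have sP1G : P1 \subset G by rewrite join_subG sUG (subset_trans sSL sLG).
  have eUS : U :&: S = U :&: L.
    apply/eqP; rewrite eqEsubset setIS //= subsetI subsetIl sULS.
    by [].
  have e1 : #|G : P1| = #|L : S|.
    have A := mul_cardG U L; rewrite -/L eG in A.
    have B := mul_cardG U S; rewrite -eP1 eUS in B.
    have C := Lagrange sP1G; have D := Lagrange sSL.
    have c0 : 0 < #|U :&: L| := cardG_gt0 _.
    have q0 : 0 < #|P1| := cardG_gt0 _.
    apply/eqP; rewrite -(eqn_pmul2l c0) -(eqn_pmul2l q0).
    by apply/eqP; apply: arith1 A B C D.
  have sylP1 : p.-Sylow(G) P1.
    rewrite /pHall sP1G /= e1; case/and3P: (sylS) => _ _ ->.
    by rewrite andbT eP1 pgroupM pU (pHall_pgroup sylS).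
  have [x Gx eP1x] := Sylow_trans sylP sylP1.
  have sUPhi1 : U \subset 'Phi(P1).
    by rewrite eP1x PhiJ -(normsP nUG x Gx) conjSg.
  have ePhi : 'Phi(P1) <*> S = P1.
    have h : U * S \subset 'Phi(P1) <*> S.
      by rewrite mul_subG ?joing_subr // (subset_trans sUPhi1 (joing_subl _ _)).
    apply/eqP; rewrite eqEsubset join_subG Phi_sub joing_subr /=.
    by rewrite -eP1 in h.
  have eS : (S : {set gT}) = P1 by rewrite -(genGid S); apply: Phi_nongen.
  have sUL : U \subset L.
    by apply: subset_trans sSL; rewrite eS joing_subl.
  have eGL : (G : {set gT}) = L by rewrite -eG mulSGid.
  have nR0G : G \subset 'N(R0) by rewrite eGL subsetIr.
  have sR0G : R0 \subset G := subset_trans sR0M sMG.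
  have sR0O : R0 \subset 'O_p^'(G).
    by apply: pcore_max p'R0 _; rewrite /normal sR0G.
  have R01 : (R0 : {set gT}) = 1 by apply/trivgP; rewrite -R1.
  by rewrite -eM -eUR0 R01 mulg1 trivg_quotient.
have nUP := subset_trans sPG nUG.
have := pss_structure prp (p_solvable_quo nsUG psG) (IHq U nsUG ntGU)
  (quotient_pHall nUP sylP).
rewrite R'1 mulg1 => nsPUG.
have nsUP : U <| P by rewrite /normal sUP nUP.
have nsPG : P <| G.
  by rewrite -(quotientGK nsUP) -(quotientGK nsUG) cosetpre_normal.
have eN : 'N_G(P) = G by apply/setIidPl; apply: normal_norm.
move: pssN; rewrite eN => pssG.
by have := pssG _ _ chG; rewrite (chief_card chG) indexg1; apply.
Qed.

Unset Implicit Arguments.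

Theorem theorem1p2 (gT : finGroupType) (p : nat) (G P H : {group gT}) :
  prime p ->
  p_solvable p G ->
  P \in 'Syl_p(G) ->
  H \subset P ->
  P^`(1) \subset H ->
  H \subset 'Phi(P) ->
  s_semipermutable H G ->
  p_supersolvable p 'N_G(P) ->
  p_supersolvable p G.
Proof.
move=> prp; exact: (main_ind prp (ltnSn #|G|)).
Qed.
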